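(* Let Assumptions (A1) and (A3) below hold. If $\Pi^\star_\mathbb{X}$ can be reached from $x\in\mathbb{X}$ within $M$ steps, i.e. there exist $\bar u\in\mathbb{U}^M(x)$ and $l\in\{0,\dots,p^\star-1\}$ with $x_{\bar u}(M,x)=\Pi^\star_\mathbb{X}(l)$, then for all $N\in\mathbb{N}$ $$V_N^\beta(x)-\tfrac{N+1}{2}\ell^\star+\lambda(x)+\bar\lambda\le C(M),\qquad C(M)=M(\ell_{\max}-\ell^\star)+2\bar\lambda+\ell^\star p^\star .$$
   Context: System $x(k+1)=f(x(k),u(k))$ with constraint sets $\mathbb{X}\subset\mathbb{R}^n$, $\mathbb{U}\subset\mathbb{R}^m$ and stage cost $\ell:\mathbb{X}\times\mathbb{U}\to\mathbb{R}$, which is assumed non-negative. For $u\in\mathbb{U}^T$, $x_u(0,x)=x$, $x_u(k+1,x)=f(x_u(k,x),u(k))$; $\mathbb{U}^T(x)$ is the set of $u\in\mathbb{U}^T$ with $x_u(k,x)\in\mathbb{X}$ for $k=0,\dots,T$. $[k]_p$ is $k$ mod $p$. A feasible $p$-periodic orbit is $\Pi\in(\mathbb{X}\times\mathbb{U})^p$ with $\Pi_\mathbb{X}([k+1]_p)=f(\Pi(k))$; $\|(x,u)\|_\Pi:=\min_k\|(x,u)-\Pi(k)\|$; $\ell^\star:=\inf$ over all feasible periodic orbits of $\frac1p\sum_{k=0}^{p-1}\ell(\Pi(k))$; $\Pi^\star$ is a fixed feasible $p^\star$-periodic orbit attaining $\ell^\star$. $\ell_{\max}:=\sup_{\mathbb{X}\times\mathbb{U}}\ell$.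 (A1) $f,\ell$ continuous, $\mathbb{X},\mathbb{U}$ compact. (A3) There are $\lambda:\mathbb{X}\to\mathbb{R}$, $\bar\lambda$ with $|\lambda|\le\bar\lambda$ on $\mathbb{X}$, and $\underline\alpha_{\tilde\ell}\in\mathcal K_\infty$ with $\ell(x,u)-\ell^\star+\lambda(x)-\lambda(f(x,u))\ge\underline\alpha_{\tilde\ell}(\|(x,u)\|_{\Pi^\star})$ for all $x\in\mathbb{X}$, $u\in\mathbb{U}^1(x)$. $\beta_N(k)=\frac{N-k}{N}$, $J_N^\beta(x,u)=\sum_{k=0}^{N-1}\beta_N(k)\ell(x_u(k,x),u(k))$, $V_N^\beta(x)=\inf_{u\in\mathbb{U}^N(x)}J_N^\beta(x,u)$. *)

(* Defs.v *)
From HB Require Import structures.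
From mathcomp Require Import all_boot all_order all_algebra.
From mathcomp Require Import all_classical all_reals all_analysis.
Set Implicit Arguments. Unset Strict Implicit. Unset Printing Implicit Defensive.
Import Order.TTheory GRing.Theory Num.Theory.
Import numFieldNormedType.Exports.
Local Open Scope classical_set_scope.
Local Open Scope ring_scope.

Section Defs.
Variables (R : realType) (n m : nat).
Notation st := 'rV[R]_n.
Notation inp := 'rV[R]_m.
Variables (X : set st) (U : set inp) (f : st -> inp -> st) (ell : st -> inp -> R).

Fixpoint traj (x : st) (u : nat -> inp) (k : nat) : st :=
  match k with
  | 0 => x
  | k'.+1 => f (traj x u k') (u k')
  end.

Definition feasible_input (T : nat) (x : st) (u : nat -> inp) : Prop :=
  (forall k, (k < T)%N -> U (u k)) /\ (forall k, (k <= T)%N -> X (traj x u k)).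

Definition feasible_orbit (p : nat) (Pi : nat -> st * inp) : Prop :=
  (0 < p)%N /\
  (forall k, (k < p)%N -> X (Pi k).1 /\ U (Pi k).2) /\
  (forall k, (k < p)%N -> (Pi (k.+1 %% p)%N).1 = f (Pi k).1 (Pi k).2).

Definition orbit_avg_cost (p : nat) (Pi : nat -> st * inp) : R :=
  p%:R^-1 * \sum_(k < p) ell (Pi k).1 (Pi k).2.

Definition ellstar : R :=
  inf [set r | exists p Pi, feasible_orbit p Pi /\ r = orbit_avg_cost p Pi].

Definition ellmax : R := sup [set ell z.1 z.2 | z in X `*` U].

(* ||(x,u)||_Pi = min_k ||(x,u) - Pi(k)|| (max-norm on the product) *)
Definition orbit_dist (p : nat) (Pi : nat -> st * inp) (z : st * inp) : R :=
  inf [set `|z - Pi k| | k in [set k : nat | (k < p)%N]].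

Definition betaN (N k : nat) : R := (N%:R - k%:R) / N%:R.

Definition J_beta (N : nat) (x : st) (u : nat -> inp) : R :=
  \sum_(k < N) betaN N k * ell (traj x u k) (u k).

Definition V_beta (N : nat) (x : st) : R :=
  inf [set J_beta N x u | u in [set u | feasible_input N x u]].

Definition assumption_A1 : Prop :=
  {within X `*` U, continuous (fun z : st * inp => f z.1 z.2)} /\
  {within X `*` U, continuous (fun z : st * inp => ell z.1 z.2)} /\
  compact X /\ compact U.

Definition optimal_orbit (pstar : nat) (Pistar : nat -> st * inp) : Prop :=
  feasible_orbit pstar Pistar /\ orbit_avg_cost pstar Pistar = ellstar.

End Defs.

Definition K_infty (R : realType) (alpha : R -> R) : Prop :=
  {within [set r : R | 0 <= r], continuous alpha} /\
  alpha 0 = 0 /\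
  (forall r s : R, 0 <= r -> r < s -> alpha r < alpha s) /\
  (forall K : R, exists r : R, 0 <= r /\ K < alpha r).

Definition assumption_A3 (R : realType) (n m : nat) (X : set 'rV[R]_n)
  (U : set 'rV[R]_m) (f : 'rV[R]_n -> 'rV[R]_m -> 'rV[R]_n)
  (ell : 'rV[R]_n -> 'rV[R]_m -> R) (pstar : nat) (Pistar : nat -> 'rV[R]_n * 'rV[R]_m)
  (lam : 'rV[R]_n -> R) (lambar : R) (alpha : R -> R) : Prop :=
  (forall x, X x -> `|lam x| <= lambar) /\
  K_infty alpha /\
  (forall x u, X x -> U u -> X (f x u) ->
     alpha (orbit_dist pstar Pistar (x, u)) <=
       ell x u - ellstar X U f ell + lam x - lam (f x u)).

(* Main.v *)
Require Import Defs.
From mathcomp Require Import all_boot all_order all_algebra.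
From mathcomp Require Import all_classical all_reals all_analysis.
From mathcomp Require Import ring lra.
From mathcomp.zify Require Import zify.
Import Order.TTheory GRing.Theory Num.Theory.
Import numFieldNormedType.Exports.
Local Open Scope classical_set_scope.
Local Open Scope ring_scope.



Lemma per_shift1 (R : realType) (p : nat) (g : nat -> R) :
  (forall i, g (i + p)%N = g i) ->
  \sum_(0 <= i < p) g i.+1 = \sum_(0 <= i < p) g i.
Proof.
move=> gper.
have := big_nat_recl p 0 (fun i => g i) (leq0n p) (op := +%R) (idx := 0).
rewrite big_nat_recr //= => E.
have gp : g p = g 0%N by rewrite -(gper 0%N) add0n.
move: E; rewrite gp => E.
lra.
Qed.

Lemma per_shift (R : realType) (p : nat) (g : nat -> R) :
  (forall i, g (i + p)%N = g i) -> forall l,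
  \sum_(0 <= i < p) g (l + i)%N = \sum_(0 <= i < p) g i.
Proof.
move=> gper; elim=> [|l IH]; first by apply: eq_bigr => i _; rewrite add0n.
rewrite -IH -(@per_shift1 R p (fun i => g (l + i)%N)); last by move=> i; rewrite addnA gper.
by apply: eq_bigr => i _; rewrite addSnnS.
Qed.

Lemma per_mult (R : realType) (p : nat) (g : nat -> R) :
  (forall i, g (i + p)%N = g i) -> forall q,
  \sum_(0 <= i < q * p) g i = q%:R * \sum_(0 <= i < p) g i.
Proof.
move=> gper; elim=> [|q IH]; first by rewrite mul0n big_geq // mul0r.
rewrite mulSn addnC (big_cat_nat _ (n := q * p)) ?leq_addr //=.
have -> : \sum_(q * p <= i < q * p + p) g i = \sum_(0 <= i < p) g (i + q * p)%N.
  by rewrite -{1}[(q * p)%N]add0n big_addn addKn.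
rewrite IH mulrSr mulrDl mul1r; congr (_ + _).
apply: eq_bigr => i _.
elim: q {IH} => [|q IHq]; first by rewrite mul0n addn0.
by rewrite mulSn (addnC p) addnA gper IHq.
Qed.

Lemma per_bound (R : realType) (p : nat) (g : nat -> R) :
  (0 < p)%N -> (forall i, g (i + p)%N = g i) -> (forall i, 0 <= g i) -> forall t,
  \sum_(0 <= i < t) g i <= (t + p)%:R / p%:R * \sum_(0 <= i < p) g i.
Proof.
move=> p0 gper g0 t.
set q := (t %/ p).+1.
have tq : (t <= q * p)%N by rewrite ltnW // ltn_ceil.
have -> : \sum_(0 <= i < t) g i = \sum_(0 <= i < q * p) g i - \sum_(t <= i < q * p) g i.
  by rewrite [X in _ = X - _](big_cat_nat _ (n := t)) //= addrK.
rewrite per_mult //.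
have H1 : 0 <= \sum_(t <= i < q * p) g i by apply: sumr_ge0.
have H2 : 0 <= \sum_(0 <= i < p) g i by apply: sumr_ge0.
have H3 : q%:R <= (t + p)%:R / p%:R :> R.
  rewrite ler_pdivlMr ?ltr0n // -natrM ler_nat /q mulSn addnC leq_add2r.
  exact: leq_divM.
have := ler_wpM2r H2 H3. lra.
Qed.

Lemma bnd_ub (R : realType) (A : set R) : bounded_set A -> has_ubound A.
Proof.
move=> [M [_ HM]].
exists (M+1) => y Ay.
have := HM (M+1); rewrite ltrDl ltr01 => /(_ isT y Ay).
move=> /(le_trans (ler_norm y)) //.
Qed.

Lemma wsum (R : realType) (a : nat -> R) N :
  \sum_(0 <= k < N) (N%:R - k%:R) * a k = \sum_(0 <= j < N) \sum_(0 <= k < j.+1) a k.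
Proof.
elim: N => [|N IH]; first by rewrite !big_geq.
rewrite [RHS]big_nat_recr //= -IH.
have -> : \sum_(0 <= k < N.+1) (N.+1%:R - k%:R) * a k
   = \sum_(0 <= k < N.+1) ((N%:R - k%:R) * a k + a k).
  by apply: eq_bigr => k _; rewrite -natr1; ring.
rewrite big_split /= big_nat_recr //= subrr mul0r addr0 //.
Qed.

Lemma tri (R : realType) N :
  \sum_(0 <= j < N) (j.+1)%:R * 2 = (N * N.+1)%:R :> R.
Proof.
elim: N => [|N IH]; first by rewrite big_geq.
rewrite big_nat_recr //= IH -natrM -natrD; congr (_%:R).
rewrite mulnC [(N.+1 * _)%N]mulnC; lia.
Qed.
Lemma sum_le_const (R : realType) (F : nat -> R) (e : R) n :
  (forall i, (i < n)%N -> F i <= e) -> \sum_(0 <= i < n) F i <= n%:R * e.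
Proof.
move=> H; apply: (@le_trans _ _ (\sum_(0 <= i < n) e)).
  by apply: ler_sum_nat => i /andP [_ Hi]; apply: H.
by rewrite sumr_const_nat subn0 mulr_natl.
Qed.

Theorem lemma22 (R : realType) (n m : nat) (X : set 'rV[R]_n) (U : set 'rV[R]_m)
  (f : 'rV[R]_n -> 'rV[R]_m -> 'rV[R]_n) (ell : 'rV[R]_n -> 'rV[R]_m -> R)
  (ell_ge0 : forall x u, X x -> U u -> 0 <= ell x u)
  (A1 : assumption_A1 X U f ell)
  (pstar : nat) (Pistar : nat -> 'rV[R]_n * 'rV[R]_m)
  (Hstar : optimal_orbit X U f ell pstar Pistar)
  (lam : 'rV[R]_n -> R) (lambar : R) (alpha : R -> R)
  (A3 : assumption_A3 X U f ell pstar Pistar lam lambar alpha)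
  (x : 'rV[R]_n) (hx : X x) (M : nat)
  (reach : exists (ubar : nat -> 'rV[R]_m) (l : nat),
      feasible_input X U f M x ubar /\ (l < pstar)%N /\
      traj f x ubar M = (Pistar l).1)
  (N : nat) :
  V_beta X U f ell N x - (N.+1)%:R / 2 * ellstar X U f ell + lam x + lambar
    <= M%:R * (ellmax X U ell - ellstar X U f ell) + 2 * lambar
       + ellstar X U f ell * pstar%:R.
Proof.
move: Hstar => [[p0 [HPi Horb]] Havg].
have [Hlam _] := A3.
move: reach => [ub [l [[HubU HubX] [hl Hend]]]].
move: A1 => [_ [Hcont [cX cU]]].
set s := ellstar X U f ell in Havg *.
set emax := ellmax X U ell.
have hub : has_ubound [set ell z.1 z.2 | z in X `*` U].
  apply: bnd_ub; apply: compact_bounded.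
  exact: (continuous_compact Hcont (compact_setX cX cU)).
have ell_le : forall a b, X a -> U b -> ell a b <= emax.
  move=> a b Xa Ub; apply: (ub_le_sup hub); by exists (a, b).
pose c i := ell (Pistar i).1 (Pistar i).2.
have c0 : forall i, (i < pstar)%N -> 0 <= c i.
  by move=> i /HPi [? ?]; apply: ell_ge0.
have cle : forall i, (i < pstar)%N -> c i <= emax.
  by move=> i /HPi [? ?]; apply: ell_le.
have hsum : \sum_(0 <= i < pstar) c i = pstar%:R * s.
  rewrite -Havg /orbit_avg_cost big_mkord mulrA mulfV ?mul1r //.
  by rewrite pnatr_eq0 -lt0n.
have s0 : 0 <= s.
  rewrite -Havg /orbit_avg_cost mulr_ge0 ?invr_ge0 ?ler0n //.
  by apply: sumr_ge0 => i _; apply: c0.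
have sle : s <= emax.
  have : pstar%:R * s <= pstar%:R * emax.
    by rewrite -hsum; apply: sum_le_const.
  by rewrite ler_pM2l // ltr0n.
pose u := fun k => if (k < M)%N then ub k else (Pistar ((l + (k - M)) %% pstar)%N).2.
have traj_lo : forall k, (k <= M)%N -> traj f x u k = traj f x ub k.
  elim=> [|k IH] // Hk /=.
  by rewrite IH ?(ltnW Hk) // /u Hk.
have traj_hi : forall d, traj f x u (M + d)%N = (Pistar ((l + d) %% pstar)%N).1.
  elim=> [|d IH].
    by rewrite addn0 traj_lo // Hend addn0 modn_small.
  rewrite addnS /= IH /u ltnNge leq_addr /= addKn.
  have Hk := ltn_pmod (l + d)%N p0.
  rewrite -(Horb _ Hk); congr (Pistar _).1.
  by rewrite -addn1 modnDml addn1 addnS.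
have u_hi : forall d, u (M + d)%N = (Pistar ((l + d) %% pstar)%N).2.
  by move=> d; rewrite /u ltnNge leq_addr /= addKn.
have Hfeas : forall k, U (u k) /\ X (traj f x u k).
  move=> k; case: (ltnP k M) => Hk.
    by rewrite traj_lo ?(ltnW Hk) // /u Hk; split; [apply: HubU | apply: HubX; apply: ltnW].
  rewrite -(subnKC Hk) traj_hi u_hi.
  by have [] := HPi _ (ltn_pmod (l + (k - M))%N p0).
pose a k := ell (traj f x u k) (u k).
have a0 : forall k, 0 <= a k.
  by move=> k; have [? ?] := Hfeas k; apply: ell_ge0.
have ale : forall k, a k <= emax.
  by move=> k; have [? ?] := Hfeas k; apply: ell_le.
set C' := M%:R * (emax - s) + s * pstar%:R.
have Sbound : forall j, \sum_(0 <= k < j) a k <= j%:R * s + C'.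
  move=> j; case: (leqP j M) => Hj.
    have : \sum_(0 <= k < j) a k <= j%:R * emax.
      by apply: sum_le_const.
    have : j%:R * (emax - s) <= M%:R * (emax - s).
      by apply: ler_wpM2r; [rewrite subr_ge0 | rewrite ler_nat].
    have : 0 <= s * pstar%:R by rewrite mulr_ge0.
    rewrite /C'; lra.
  rewrite -(subnKC (ltnW Hj)).
  set t := (j - M)%N.
  have split : forall t, \sum_(0 <= k < (M + t)%N) a k
      = \sum_(0 <= k < M) a k + \sum_(0 <= i < t) c ((l + i) %% pstar)%N.
    elim=> [|t' IH]; first by rewrite addn0 [X in _ + X]big_geq ?addr0.
    rewrite addnS !big_nat_recr //= ?leq0n // IH addrA; congr (_ + _).
    by rewrite /a traj_hi u_hi.
  rewrite split.
  have H1 : \sum_(0 <= k < M) a k <= M%:R * emax.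
    by apply: sum_le_const.
  have H2 := @per_bound R pstar (fun i => c ((l + i) %% pstar)%N) p0.
  have gper : forall i, c ((l + (i + pstar)) %% pstar)%N = c ((l + i) %% pstar)%N.
    by move=> i; rewrite addnA modnDr.
  have := H2 gper (fun i => c0 _ (ltn_pmod _ p0)) t.
  have -> : \sum_(0 <= i < pstar) c ((l + i) %% pstar)%N = pstar%:R * s.
    rewrite (@per_shift R pstar (fun i => c (i %% pstar)%N)); last first.
      by move=> i; rewrite /= modnDr.
    rewrite -hsum; apply: eq_big_nat => i /andP [_ Hi].
    by rewrite modn_small.
  have Hp : pstar%:R != 0 :> R by rewrite pnatr_eq0 -lt0n.
  rewrite mulrA mulfVK // natrD.
  rewrite /C'; lra.
have Jge0 : forall u', feasible_input X U f N x u' -> 0 <= J_beta f ell N x u'.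
  move=> u' [HU HX]; rewrite /J_beta; apply: sumr_ge0 => k _.
  apply: mulr_ge0.
    by rewrite /betaN divr_ge0 // subr_ge0 ler_nat ltnW.
  by apply: ell_ge0; [apply: HX; apply: ltnW | apply: HU].
have Vle : V_beta X U f ell N x <= J_beta f ell N x u.
  rewrite /V_beta; apply: ge_inf.
    by exists 0 => y [u' Hu' <-]; apply: Jge0.
  by exists u => //; split=> k _; apply Hfeas.
have lamx : lam x <= lambar by apply: ler_normlW; apply: Hlam.
have L0 : 0 <= lambar by apply: le_trans (Hlam _ hx).
have C0 : 0 <= M%:R * (emax - s) by rewrite mulr_ge0 // subr_ge0.
have ps0 : 0 <= s * pstar%:R by rewrite mulr_ge0.
case: (posnP N) => [N0|N0].
  move: Vle; rewrite N0 /J_beta big_ord0 => Vle.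
  have : 0 <= N.+1%:R / 2 * s by rewrite mulr_ge0 // divr_ge0.
  rewrite N0; lra.
have HN : N%:R != 0 :> R by rewrite pnatr_eq0 -lt0n.
have Jeq : J_beta f ell N x u * N%:R
    = \sum_(0 <= k < N) (N%:R - k%:R) * a k.
  rewrite /J_beta /betaN big_mkord mulr_suml; apply: eq_bigr => k _.
  by rewrite mulrAC divfK.
rewrite wsum in Jeq.
have Jle : J_beta f ell N x u * N%:R
    <= \sum_(0 <= j < N) ((j.+1)%:R * s + C').
  by rewrite Jeq; apply: ler_sum_nat => j _; apply: Sbound.
rewrite big_split /= sumr_const_nat subn0 -mulr_suml in Jle.
have hT : \sum_(0 <= j < N) (j.+1)%:R = N%:R * N.+1%:R / 2 :> R.
  by rewrite -natrM -tri -mulr_suml mulfK // pnatr_eq0.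
rewrite hT in Jle.
have Jb : J_beta f ell N x u <= N.+1%:R / 2 * s + C'.
  rewrite -(ler_pM2r (x := N%:R)) ?ltr0n //.
  apply: (le_trans Jle); rewrite -[C' *+ N]mulr_natr.
  rewrite le_eqVlt; apply/orP; left; apply/eqP; ring.
rewrite /C' in Jb; lra.
Qed.
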